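(* Let $G\in M_3(\mathbb{R})$ have eigenvalues $\lambda_1,\lambda_2,\lambda_3$ (counted with algebraic multiplicity) with $\Gamma_k:=\operatorname{Re}\lambda_k\ge 0$ for $k=1,2,3$, and let $f(x)=\det(x\mathbb{1}-G)$ be its characteristic polynomial. Then for every $\alpha\in[1,2]$, $$\Gamma_k\le \tfrac{1}{\alpha}\operatorname{Tr}G\ \text{ for all } k=1,2,3 \quad\Longleftrightarrow\quad f\!\left(\tfrac{\operatorname{Tr}G}{\alpha}\right)\ge 0 .$$ *)

(* Defs.v *)
From mathcomp Require Import all_boot all_order all_algebra.
From mathcomp Require Import complex.
From mathcomp Require Import reals.

(* Main.v *)
Require Import Defs.
From mathcomp Require Import all_boot all_order all_algebra.
From mathcomp Require Import complex.
From mathcomp Require Import reals.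
From mathcomp Require polyrcf.
From mathcomp Require Import ring lra.
Import Order.TTheory GRing.Theory Num.Theory.
Local Open Scope ring_scope.
Lemma key3 (R : realType) (a b c : R[i]) : complex.Im a = 0 -> complex.Re a < 0 ->
  0 < complex.Re b -> 0 < complex.Re c -> complex.Im (a * b * c) = 0 ->
  0 <= complex.Re (a * b * c) -> False.
Proof.
case: a => p q; case: b => u v; case: c => w z /= -> hp hu hw.
rewrite ?mul0r ?mulr0 ?subr0 ?addr0 ?add0r.
move=> hI hR.
have e : u * z + v * w = 0.
  have : p * (u * z + v * w) = 0 by rewrite -hI; ring.
  by move/eqP; rewrite mulf_eq0 (negbTE (ltr0_neq0 hp)) /= => /eqP.
have hR' : u * w - v * z <= 0.
  have : 0 <= p * (u * w - v * z) by move: hR; congr (_ <= _); ring.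
  by rewrite nmulr_rge0.
have E : u * (u * w - v * z) = w * (u ^+ 2 + v ^+ 2) - v * (u * z + v * w) by ring.
rewrite e mulr0 subr0 in E.
have : 0 < w * (u ^+ 2 + v ^+ 2).
  apply: mulr_gt0 => //; have := sqr_ge0 v; have : 0 < u ^+ 2 by rewrite exprn_gt0.
  lra.
rewrite -E => H.
have : u * (u * w - v * z) <= 0 by rewrite pmulr_rle0.
lra.
Qed.
Section S.
Variable R : realType.
Lemma ReD (a b : R[i]) : complex.Re (a + b) = complex.Re a + complex.Re b.
Proof. by case: a; case: b. Qed.
Lemma Re0 : complex.Re (0 : R[i]) = 0. Proof. by []. Qed.
Lemma ReN (a : R[i]) : complex.Re (- a) = - complex.Re a.
Proof. by case: a. Qed.
Lemma Re_sum (F : 'I_3 -> R[i]) : complex.Re (\sum_i F i) = \sum_i complex.Re (F i).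
Proof. exact: (big_morph _ ReD Re0). Qed.
Lemma ReCB (x : R) (z : R[i]) : complex.Re (real_complex R x - z) = x - complex.Re z.
Proof. by case: z => a b /=. Qed.
Lemma ImCB (x : R) (z : R[i]) : complex.Im (real_complex R x - z) = - complex.Im z.
Proof. by case: z => a b /=; rewrite add0r. Qed.
Lemma prod3 (F : 'I_3 -> R[i]) : \prod_(i<3) F i = F ord0 * F (inord 1) * F (inord 2).
Proof.
rewrite !big_ord_recr big_ord0 /= ?mul1r; congr (_ * _ * _); congr F; apply: val_inj => //=;
 by rewrite inordK.
Qed.
Lemma cases3 (k : 'I_3) : k = ord0 \/ k = inord 1 \/ k = inord 2.
Proof.
case: k => [[|[|[|//]]] Hk]; [left|right;left|right;right]; apply: val_inj => //=;
 by rewrite inordK.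
Qed.
Lemma ne01 : (inord 1 : 'I_3) != ord0. Proof. by rewrite -val_eqE /= inordK. Qed.
Lemma ne02 : (inord 2 : 'I_3) != ord0. Proof. by rewrite -val_eqE /= inordK. Qed.
Lemma ne12 : (inord 2 : 'I_3) != inord 1. Proof. by rewrite -val_eqE /= !inordK. Qed.
End S.

Theorem mainTheorem2 (R : realType) (G : 'M[R]_3) (lam : 'I_3 -> R[i])
  (Hlam : map_poly (real_complex R) (char_poly G)
          = \prod_(k < 3) ('X - (lam k)%:P))
  (Hre : forall k : 'I_3, 0 <= complex.Re (lam k))
  (alpha : R) (Halpha : 1 <= alpha <= 2) :
  (forall k : 'I_3, complex.Re (lam k) <= \tr G / alpha)
  <-> 0 <= (char_poly G).[\tr G / alpha].
Proof.
set f := char_poly G; set t := \tr G; set s := t / alpha.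
set P := map_poly (real_complex R) f.
have [Ha1 Ha2] : 1 <= alpha /\ alpha <= 2 by apply/andP.
have Ha : 0 < alpha by lra.
have Hev : forall z : R[i], P.[z] = \prod_(k < 3) (z - lam k).
  by move=> z; rewrite /P Hlam horner_prod; apply: eq_bigr => k _; rewrite hornerXsubC.
have Hreal : forall x : R, real_complex R (f.[x]) = P.[real_complex R x].
  by move=> x; rewrite /P horner_map.
have Hroot : forall z, P.[z] = 0 -> exists k, z = lam k.
  move=> z; rewrite Hev => /eqP /prodf_eq0 [k _].
  by rewrite subr_eq0 => /eqP ->; exists k.
have Hconj : forall z, P.[conjc z] = conjc (P.[z]).
  move=> z; rewrite -horner_map /P -map_poly_comp; congr horner.
  by apply: eq_map_poly => x /=; rewrite oppr0.
have Htr : t = \sum_i complex.Re (lam i).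
  have := congr1 (fun p : {poly R[i]} => p`_2) Hlam.
  rewrite coef_map /= (@char_poly_trace _ 3 G) //.
  rewrite (_ : \prod_(k<3) _ = \prod_(z <- map lam (index_enum 'I_3)) ('X - z%:P));
    last by rewrite big_map.
  have Hs : size (map lam (index_enum 'I_3)) = 3 by rewrite size_map /index_enum -enumT size_enum_ord.
  have E := @coefPn_prod_XsubC _ (map lam (index_enum 'I_3)).
  rewrite Hs in E; rewrite E // big_map.
  move/(congr1 (@complex.Re R)); rewrite !ReN Re_sum /= => /oppr_inj.
  by rewrite /t.
have Ht0 : 0 <= t by rewrite Htr; apply: sumr_ge0 => i _.
have Hst : s * alpha = t by rewrite /s mulfVK // gt_eqF.
have H2s : t <= 2 * s by nra.
have Hs0 : 0 <= s by nra.
split.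
- move=> Hle; rewrite leNgt; apply/negP => Hneg.
  have Hlc : 0 < lead_coef f by rewrite (monicP (char_poly_monic G)) ltr01.
  have [n Hn] := @polyrcf.poly_pinfty_gt_lc R f Hlc.
  rewrite (monicP (char_poly_monic G)) in Hn.
  set b := Order.max n s.
  have Hb : 1 <= f.[b] by apply: Hn; rewrite le_max lexx.
  have [x /andP [Hsx Hxb] rx] : exists2 x, s <= x <= b & root f x.
    apply: poly_ivt; first by rewrite le_max lexx orbT.
    by apply/andP; split; lra.
  have fx : f.[x] = 0 by apply/rootP.
  have Hsx' : s < x.
    rewrite lt_neqAle Hsx andbT; apply/eqP => Exs; move: Hneg; rewrite Exs fx; lra.
  have [k Hk] : exists k, real_complex R x = lam k by apply: Hroot; rewrite -Hreal fx.
  have := Hle k; rewrite -Hk /=; lra.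
- move=> Hf k; rewrite leNgt; apply/negP => Hk.
  have Hoth : forall j, j != k -> complex.Re (lam j) < s.
    move=> j jk.
    have : complex.Re (lam j) + complex.Re (lam k) <= t.
      rewrite Htr (bigD1 k) //= (bigD1 j) //=.
      have : 0 <= \sum_(i | (i != k) && (i != j)) complex.Re (lam i) by apply: sumr_ge0.
      lra.
    lra.
  have [m Hm] : exists m, conjc (lam k) = lam m.
    by apply: Hroot; rewrite Hconj (Hev (lam k)) (bigD1 k) //= subrr mul0r rmorph0.
  have Hmk : m = k.
    apply/eqP; apply/negPn/negP => mk.
    have := Hoth m mk; rewrite -Hm.
    case: (lam k) Hk => a b /=; lra.
  rewrite {}Hmk in Hm.
  have HIk : complex.Im (lam k) = 0.
    move: Hm; case: (lam k) => a b [] /= E; lra.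
  have Hfs := Hreal s; rewrite Hev in Hfs.
  have HI : complex.Im (\prod_(i<3) (real_complex R s - lam i)) = 0 by rewrite -Hfs.
  have HR : 0 <= complex.Re (\prod_(i<3) (real_complex R s - lam i)) by rewrite -Hfs.
  rewrite prod3 in HI HR.
  have Pos : forall j, j != k -> 0 < complex.Re (real_complex R s - lam j).
    by move=> j jk; rewrite ReCB subr_gt0 Hoth.
  have Nk : complex.Re (real_complex R s - lam k) < 0 by rewrite ReCB subr_lt0.
  have Ik : complex.Im (real_complex R s - lam k) = 0 by rewrite ImCB HIk oppr0.
  case: (cases3 k) => [Ek|[Ek|Ek]]; rewrite Ek in Nk Ik Pos.
  + apply: (@key3 R _ _ _ Ik Nk _ _ HI HR); apply: Pos; [exact: ne01|exact: ne02].
  + rewrite (mulrC (_ - lam ord0)) in HI HR.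
    apply: (@key3 R _ _ _ Ik Nk _ _ HI HR); apply: Pos; [by rewrite eq_sym; exact: ne01|exact: ne12].
  + rewrite mulrC mulrA in HI HR.
    apply: (@key3 R _ _ _ Ik Nk _ _ HI HR); apply: Pos; by rewrite eq_sym ?ne02 ?ne12.
Qed.
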